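(* Let $u:[0,\infty)\to\mathbb R$ be continuous and let $(x_1,x_2)$ be a solution of the age-structured predator–prey system $$\partial_t x_1+\partial_a x_1=-x_1\Big[\mu_1(a)+u(t)+\int_0^A g_1(\alpha)x_2(\alpha,t)d\alpha\Big],\quad \partial_t x_2+\partial_a x_2=-x_2\Big[\mu_2(a)+u(t)+\frac{1}{\int_0^A g_2(\alpha)x_1(\alpha,t)d\alpha}\Big],$$ $x_i(0,t)=\int_0^A k_i(a)x_i(a,t)da$, with $x_i(\cdot,t)\in\mathcal F_i$ for all $t\ge0$ and initial data $x_i(\cdot,0)=x_{i,0}\in\mathcal F_i$. Define $\eta_i(t)=\ln\Pi_i[x_i(\cdot,t)]$. Then there are functions $\psi_i:[-A,\infty)\to(-1,\infty)$ such that $$\psi_i(t-a)=\frac{x_i(a,t)}{x_i^*(a)\,\Pi_i[x_i(\cdot,t)]}-1\quad\text{for all }t\ge0,\ a\in[0,A],$$ so that $x_i(a,t)=x_i^*(a)e^{\eta_i(t)}(1+\psi_i(t-a))$, and $(\eta,\psi)$ satisfy $$\dot\eta_1(t)=\zeta_1-u(t)-e^{\eta_2(t)}\int_0^A g_1(a)x_2^*(a)(1+\psi_2(t-a))\,da,$$ $$\dot\eta_2(t)=\zeta_2-u(t)-\frac{e^{-\eta_1(t)}}{\int_0^A g_2(a)x_1^*(a)(1+\psi_1(t-a))\,da},$$ $$\psi_i(t)=\int_0^A\tilde k_i(a)\psi_i(t-a)\,da\quad(t\ge0),$$ with $\eta_i(0)=\ln\Pi_i[x_{i,0}]$ and $\psi_i(-a)=\frac{x_{i,0}(a)}{x_i^*(a)\Pi_i[x_{i,0}]}-1$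 for $a\in[0,A]$.
   Context: $A>0$; for $i=1,2$, $\mu_i,k_i,g_i:[0,A]\to[0,\infty)$ are (piecewise continuous) with positive integrals over $[0,A]$. $\zeta_i\in\mathbb R$ is the unique real number with $\int_0^A k_i(a)e^{-\int_0^a(\mu_i(s)+\zeta_i)ds}da=1$, and $\tilde k_i(a)=k_i(a)e^{-\int_0^a(\mu_i(s)+\zeta_i)ds}$. $x_i^*(a)=x_i^*(0)e^{-\int_0^a(\zeta_i+\mu_i(s))ds}$ with some constant $x_i^*(0)>0$ (the equilibrium profiles). $\mathcal F_i$ is the set of functions $\xi\in PC^1([0,A];(0,\infty))$ with $\xi(0)=\int_0^A k_i(a)\xi(a)da$, where $PC^1$ denotes continuous functions that are continuously differentiable except at finitely many points where one-sided limits of the derivative exist and are finite. The functionals are $\Pi_i[\xi]=\frac{\int_0^A\pi_{0,i}(a)\xi(a)da}{\int_0^A a\,k_i(a)x_i^*(a)da}$ with $\pi_{0,i}(a)=\int_a^A k_i(s)e^{\int_s^a(\zeta_i+\mu_i(l))dl}ds$. *)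

(* Defs.v *)
From Stdlib Require Import Reals.
From Coquelicot Require Import Coquelicot.
Open Scope R_scope.

Definition cont_on_cc (A : R) (f : R -> R) : Prop :=
  forall x, 0 <= x <= A ->
    filterlim f (within (fun y => 0 <= y <= A) (locally x)) (locally (f x)).

Definition partition (A : R) (p : nat -> R) (n : nat) : Prop :=
  p O = 0 /\ p n = A /\ forall i, (i < n)%nat -> p i < p (S i).

Definition PC (A : R) (f : R -> R) : Prop :=
  exists (p : nat -> R) (n : nat), partition A p n /\
    forall i, (i < n)%nat ->
      (forall x, p i < x < p (S i) -> continuous f x) /\
      (exists l, filterlim f (at_right (p i)) (locally l)) /\
      (exists l, filterlim f (at_left (p (S i))) (locally l)).

Definition PC1 (A : R) (f : R -> R) : Prop :=
  cont_on_cc A f /\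
  exists (p : nat -> R) (n : nat), partition A p n /\
    forall i, (i < n)%nat ->
      (forall x, p i < x < p (S i) -> ex_derive f x /\ continuous (Derive f) x) /\
      (exists l, filterlim (Derive f) (at_right (p i)) (locally l)) /\
      (exists l, filterlim (Derive f) (at_left (p (S i))) (locally l)).

Definition admissible (A : R) (f : R -> R) : Prop :=
  PC A f /\ (forall a, 0 <= a <= A -> 0 <= f a) /\ 0 < RInt f 0 A.

Definition is_zeta (A : R) (mu k : R -> R) (zeta : R) : Prop :=
  RInt (fun a => k a * exp (- RInt (fun s => mu s + zeta) 0 a)) 0 A = 1.

Definition ktilde (mu k : R -> R) (zeta : R) (a : R) : R :=
  k a * exp (- RInt (fun s => mu s + zeta) 0 a).

Definition xstar (mu : R -> R) (zeta c : R) (a : R) : R :=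
  c * exp (- RInt (fun s => zeta + mu s) 0 a).

Definition in_F (A : R) (k : R -> R) (xi : R -> R) : Prop :=
  PC1 A xi /\ (forall a, 0 <= a <= A -> 0 < xi a) /\
  xi 0 = RInt (fun a => k a * xi a) 0 A.

Definition pi0 (A : R) (mu k : R -> R) (zeta : R) (a : R) : R :=
  RInt (fun s => k s * exp (RInt (fun l => zeta + mu l) s a)) a A.

Definition Pi (A : R) (mu k : R -> R) (zeta c : R) (xi : R -> R) : R :=
  RInt (fun a => pi0 A mu k zeta a * xi a) 0 A /
  RInt (fun a => a * k a * xstar mu zeta c a) 0 A.

(* A solution of  d_t x + d_a x = - x [mu(a) + u(t) + F(t)]  in the
   characteristic (integrated along characteristics) sense. *)
Definition char_sol (A : R) (mu u F : R -> R) (x : R -> R -> R) : Prop :=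
  forall a t s, 0 <= a -> 0 <= t -> 0 <= s -> a + s <= A ->
    x (a + s) (t + s) =
      x a t * exp (- RInt (fun r => mu (a + r) + u (t + r) + F (t + r)) 0 s).

Definition cont_strip (A : R) (x : R -> R -> R) : Prop :=
  forall a t, 0 <= a <= A -> 0 <= t ->
    filterlim (fun p : R * R => x (fst p) (snd p))
      (within (fun p : R * R => 0 <= fst p <= A /\ 0 <= snd p) (locally (a, t)))
      (locally (x a t)).

Definition deriv_nonneg (f : R -> R) (t v : R) : Prop :=
  filterlim (fun s => (f s - f t) / (s - t))
    (within (fun s => 0 <= s /\ s <> t) (locally t)) (locally v).

Definition is_solution (A : R) (mu1 mu2 k1 k2 g1 g2 u : R -> R)
  (x10 x20 : R -> R) (x1 x2 : R -> R -> R) : Prop :=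
  cont_strip A x1 /\ cont_strip A x2 /\
  (forall t, 0 <= t -> in_F A k1 (fun a => x1 a t) /\ in_F A k2 (fun a => x2 a t)) /\
  (forall t, 0 <= t -> x1 0 t = RInt (fun a => k1 a * x1 a t) 0 A /\
                       x2 0 t = RInt (fun a => k2 a * x2 a t) 0 A) /\
  (forall a, 0 <= a <= A -> x1 a 0 = x10 a /\ x2 a 0 = x20 a) /\
  char_sol A mu1 u (fun t => RInt (fun al => g1 al * x2 al t) 0 A) x1 /\
  char_sol A mu2 u (fun t => / RInt (fun al => g2 al * x1 al t) 0 A) x2.

(* Main.v *)
Require Import Defs.
From Stdlib Require Import Reals Lra Lia Classical ClassicalEpsilon FunctionalExtensionality.
From Coquelicot Require Import Coquelicot.
Open Scope R_scope.

Lemma cont_pt_eps f x : continuity_pt f x -> forall eps, 0 < eps ->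
  exists d, 0 < d /\ forall y, Rabs (y - x) < d -> Rabs (f y - f x) < eps.
Proof.
intros H eps Heps. apply continuity_pt_filterlim in H.
destruct (proj1 (filterlim_locally _ _) H (mkposreal eps Heps)) as [d Hd].
exists d; split; [apply cond_pos|]. intros y Hy. apply (Hd y Hy).
Qed.

Lemma eps_cont_pt f x : (forall eps, 0 < eps ->
  exists d, 0 < d /\ forall y, Rabs (y - x) < d -> Rabs (f y - f x) < eps) ->
  continuity_pt f x.
Proof.
intros H. apply continuity_pt_filterlim. apply filterlim_locally.
intros eps. destruct (H eps (cond_pos eps)) as [d [Hd H']].
exists (mkposreal d Hd). intros y Hy. apply H'. exact Hy.
Qed.

Lemma lip_cont f M x : (forall y z, Rabs (f y - f z) <= M * Rabs (y - z)) ->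
  continuity_pt f x.
Proof.
intros H. apply eps_cont_pt. intros eps Heps.
exists (eps / (Rabs M + 1)). split.
{ apply Rdiv_lt_0_compat; [lra|]. pose proof (Rabs_pos M); lra. }
intros y Hy. eapply Rle_lt_trans. apply H.
pose proof (Rabs_pos M). pose proof (Rabs_pos (y - x)).
apply Rle_lt_trans with ((Rabs M + 1) * Rabs (y - x)).
{ apply Rle_trans with (Rabs M * Rabs (y - x)).
  apply Rmult_le_compat_r; [lra|]. apply RRle_abs. nra. }
apply Rlt_le_trans with ((Rabs M + 1) * (eps / (Rabs M + 1))).
apply Rmult_lt_compat_l; lra. right. field. lra.
Qed.

Definition cl (A y : R) := Rmax 0 (Rmin A y).

Lemma cl_range A y : 0 <= A -> 0 <= cl A y <= A.
Proof. intros. unfold cl, Rmax, Rmin. repeat destruct Rle_dec; lra. Qed.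

Lemma cl_id A y : 0 <= y <= A -> cl A y = y.
Proof. intros. unfold cl, Rmax, Rmin. repeat destruct Rle_dec; lra. Qed.

Lemma cl_lip A y z : 0 <= A -> Rabs (cl A y - cl A z) <= Rabs (y - z).
Proof.
intros. unfold cl, Rmax, Rmin. repeat destruct Rle_dec;
unfold Rabs; repeat destruct Rcase_abs; lra.
Qed.

Lemma cc_eps A f x : cont_on_cc A f -> 0 <= x <= A -> forall eps, 0 < eps ->
  exists d, 0 < d /\ forall y, 0 <= y <= A -> Rabs (y - x) < d -> Rabs (f y - f x) < eps.
Proof.
intros H Hx eps Heps. specialize (H x Hx).
destruct (proj1 (filterlim_locally _ _) H (mkposreal eps Heps)) as [d Hd].
exists d; split; [apply cond_pos|]. intros y Hy Hy'. apply (Hd y Hy' Hy).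
Qed.

Lemma cc_clamp A f : 0 <= A -> cont_on_cc A f ->
  forall y, continuity_pt (fun z => f (cl A z)) y.
Proof.
intros HA H y. apply eps_cont_pt. intros eps Heps.
destruct (cc_eps A f (cl A y) H (cl_range A y HA) eps Heps) as [d [Hd H']].
exists d; split; auto. intros z Hz. apply H'. apply cl_range; auto.
eapply Rle_lt_trans. apply cl_lip; auto. auto.
Qed.

Lemma hl_clamp (u : R -> R) :
  (forall t, 0 <= t -> filterlim u (within (fun s => 0 <= s) (locally t)) (locally (u t))) ->
  forall y, continuity_pt (fun z => u (Rmax 0 z)) y.
Proof.
intros H y. apply eps_cont_pt. intros eps Heps.
assert (Hy : 0 <= Rmax 0 y) by apply Rmax_l.
specialize (H _ Hy).
destruct (proj1 (filterlim_locally _ _) H (mkposreal eps Heps)) as [d Hd].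
exists d; split; [apply cond_pos|]. intros z Hz. apply (Hd (Rmax 0 z)).
- change (Rabs (Rmax 0 z - Rmax 0 y) < d).
  eapply Rle_lt_trans; [|exact Hz]. unfold Rmax; repeat destruct Rle_dec;
  unfold Rabs; repeat destruct Rcase_abs; lra.
- apply Rmax_l.
Qed.

Lemma right_eps h p l : filterlim h (at_right p) (locally l) ->
  forall eps, 0 < eps -> exists d, 0 < d /\ forall y, Rabs (y - p) < d -> p < y -> Rabs (h y - l) < eps.
Proof.
intros H eps Heps.
destruct (proj1 (filterlim_locally _ _) H (mkposreal eps Heps)) as [d Hd].
exists d; split; [apply cond_pos|]. intros y Hy Hy'. apply (Hd y Hy Hy').
Qed.

Lemma left_eps h p l : filterlim h (at_left p) (locally l) ->
  forall eps, 0 < eps -> exists d, 0 < d /\ forall y, Rabs (y - p) < d -> y < p -> Rabs (h y - l) < eps.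
Proof.
intros H eps Heps.
destruct (proj1 (filterlim_locally _ _) H (mkposreal eps Heps)) as [d Hd].
exists d; split; [apply cond_pos|]. intros y Hy Hy'. apply (Hd y Hy Hy').
Qed.

Lemma piece_int (h : R -> R) p q (l1 l2 : R) : p < q -> (forall x, p < x < q -> continuous h x) ->
  filterlim h (at_right p) (locally l1) -> filterlim h (at_left q) (locally l2) ->
  ex_RInt h p q.
Proof.
intros Hpq Hc H1 H2.
set (g := fun x => if Rle_dec x p then l1 else if Rle_dec q x then l2 else h x).
apply ex_RInt_ext with g.
{ intros x Hx. rewrite Rmin_left in Hx by lra. rewrite Rmax_right in Hx by lra.
  unfold g; destruct Rle_dec; [lra|]; destruct Rle_dec; [lra|]; reflexivity. }
apply (ex_RInt_continuous (V := R_CompleteNormedModule)). intros z Hz.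
rewrite Rmin_left in Hz by lra. rewrite Rmax_right in Hz by lra.
apply continuity_pt_filterlim. apply eps_cont_pt. intros eps Heps.
destruct (Req_dec z p) as [Ez|Ez].
{ subst z. destruct (right_eps _ _ _ H1 eps Heps) as [d [Hd H']].
  exists (Rmin d (q - p)). split. apply Rmin_glb_lt; lra.
  intros y Hy. assert (Hy1 : Rabs (y - p) < d) by (eapply Rlt_le_trans; [exact Hy|apply Rmin_l]).
  assert (Hy2 : Rabs (y - p) < q - p) by (eapply Rlt_le_trans; [exact Hy|apply Rmin_r]).
  unfold g. destruct (Rle_dec p p); [|lra].
  destruct (Rle_dec y p). rewrite Rminus_diag, Rabs_R0; lra.
  destruct (Rle_dec q y). exfalso. unfold Rabs in Hy2; destruct Rcase_abs in Hy2; lra.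
  apply H'; auto; lra. }
destruct (Req_dec z q) as [Ez'|Ez'].
{ subst z. destruct (left_eps _ _ _ H2 eps Heps) as [d [Hd H']].
  exists (Rmin d (q - p)). split. apply Rmin_glb_lt; lra.
  intros y Hy. assert (Hy1 : Rabs (y - q) < d) by (eapply Rlt_le_trans; [exact Hy|apply Rmin_l]).
  assert (Hy2 : Rabs (y - q) < q - p) by (eapply Rlt_le_trans; [exact Hy|apply Rmin_r]).
  unfold g. destruct (Rle_dec q p); [lra|]. destruct (Rle_dec q q); [|lra].
  destruct (Rle_dec y p). exfalso. unfold Rabs in Hy2; destruct Rcase_abs in Hy2; lra.
  destruct (Rle_dec q y). rewrite Rminus_diag, Rabs_R0; lra.
  apply H'; auto; lra. }
assert (Hz' : p < z < q) by lra.
pose proof (Hc z Hz') as Hcz. apply continuity_pt_filterlim in Hcz.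
destruct (cont_pt_eps _ _ Hcz eps Heps) as [d [Hd H']].
exists (Rmin d (Rmin (z - p) (q - z))). split.
{ repeat apply Rmin_glb_lt; lra. }
intros y Hy.
assert (Hy1 : Rabs (y - z) < d) by (eapply Rlt_le_trans; [exact Hy|apply Rmin_l]).
assert (Hy2 : Rabs (y - z) < Rmin (z - p) (q - z)) by (eapply Rlt_le_trans; [exact Hy|apply Rmin_r]).
assert (Hy3 : Rabs (y - z) < z - p) by (eapply Rlt_le_trans; [exact Hy2|apply Rmin_l]).
assert (Hy4 : Rabs (y - z) < q - z) by (eapply Rlt_le_trans; [exact Hy2|apply Rmin_r]).
unfold g. destruct (Rle_dec z p); [lra|]. destruct (Rle_dec q z); [lra|].
destruct (Rle_dec y p). exfalso. unfold Rabs in Hy3; destruct Rcase_abs in Hy3; lra.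
destruct (Rle_dec q y). exfalso. unfold Rabs in Hy4; destruct Rcase_abs in Hy4; lra.
apply H'; auto.
Qed.

Lemma PC_ex_RInt A (h : R -> R) : PC A h -> ex_RInt h 0 A.
Proof.
intros [p [n [[H0 [Hn Hinc]] Hp]]].
assert (forall j, (j <= n)%nat -> ex_RInt h 0 (p j)).
{ induction j; intros Hj. rewrite H0; apply ex_RInt_point.
  apply ex_RInt_Chasles with (p j). apply IHj; lia.
  destruct (Hp j) as [Hc [[l1 H1] [l2 H2]]]; [lia|].
  apply piece_int with l1 l2; auto; apply Hinc; lia. }
rewrite <- Hn. apply H; lia.
Qed.

Lemma int_sub A (h : R -> R) a b : ex_RInt h 0 A -> 0 <= a <= A -> 0 <= b <= A -> ex_RInt h a b.
Proof.
intros H Ha Hb.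
assert (Hs : forall a b, 0 <= a <= b -> b <= A -> ex_RInt h a b).
{ intros a' b' H1 H2. apply (ex_RInt_Chasles_2 (V:=R_CompleteNormedModule)) with 0. lra.
  apply (ex_RInt_Chasles_1 (V:=R_CompleteNormedModule)) with A. lra. auto. }
destruct (Rle_dec a b). apply Hs; lra. apply ex_RInt_swap. apply Hs; lra.
Qed.

Lemma PC_mul A h g : PC A h -> (forall x, continuity_pt g x) -> PC A (fun a => h a * g a).
Proof.
intros [p [n [Hpart Hp]]] Hg. exists p, n. split; auto.
intros i Hi. destruct (Hp i Hi) as [Hc [[l1 H1] [l2 H2]]]. split; [|split].
- intros x Hx. apply (continuous_mult h g). apply Hc; auto.
  apply continuity_pt_filterlim; auto.
- exists (l1 * g (p i)).
  apply (filterlim_comp_2 (G:=locally l1) (H:=locally (g (p i))) h g Rmult); auto.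
  eapply filterlim_filter_le_1. apply filter_le_within.
  apply continuity_pt_filterlim; auto.
  apply (filterlim_mult (K:=R_AbsRing) l1 (g (p i))).
- exists (l2 * g (p (S i))).
  apply (filterlim_comp_2 (G:=locally l2) (H:=locally (g (p (S i)))) h g Rmult); auto.
  eapply filterlim_filter_le_1. apply filter_le_within.
  apply continuity_pt_filterlim; auto.
  apply (filterlim_mult (K:=R_AbsRing) l2 (g (p (S i)))).
Qed.

Ltac reqR := match goal with |- @eq _ ?a ?b => change (@eq R a b) end.

Lemma RInt_scal_R (f : R -> R) a b l : ex_RInt f a b -> RInt (fun x => l * f x) a b = l * RInt f a b.
Proof. intros H. exact (RInt_scal f a b l H). Qed.
Lemma RInt_plus_R (f g : R -> R) a b : ex_RInt f a b -> ex_RInt g a b ->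
  RInt (fun x => f x + g x) a b = RInt f a b + RInt g a b.
Proof. intros H1 H2. exact (RInt_plus f g a b H1 H2). Qed.
Lemma RInt_minus_R (f g : R -> R) a b : ex_RInt f a b -> ex_RInt g a b ->
  RInt (fun x => f x - g x) a b = RInt f a b - RInt g a b.
Proof. intros H1 H2. exact (RInt_minus f g a b H1 H2). Qed.
Lemma ex_RInt_scal_R (f : R -> R) a b l : ex_RInt f a b -> ex_RInt (fun x => l * f x) a b.
Proof. intros H. exact (ex_RInt_scal f a b l H). Qed.
Lemma ex_RInt_plus_R (f g : R -> R) a b : ex_RInt f a b -> ex_RInt g a b ->
  ex_RInt (fun x => f x + g x) a b.
Proof. intros H1 H2. exact (ex_RInt_plus f g a b H1 H2). Qed.
Lemma ex_RInt_minus_R (f g : R -> R) a b : ex_RInt f a b -> ex_RInt g a b ->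
  ex_RInt (fun x => f x - g x) a b.
Proof. intros H1 H2. exact (ex_RInt_minus f g a b H1 H2). Qed.
Lemma RInt_Chasles_R (f : R -> R) a b c : ex_RInt f a b -> ex_RInt f b c ->
  RInt f a b + RInt f b c = RInt f a c.
Proof. intros H1 H2. exact (RInt_Chasles f a b c H1 H2). Qed.
Lemma RInt_const_R a b c : RInt (fun _ => c) a b = (b - a) * c.
Proof. exact (RInt_const a b c). Qed.
Lemma ex_RInt_cont_R (f : R -> R) a b : (forall x, continuity_pt f x) -> ex_RInt f a b.
Proof. intros H. apply (ex_RInt_continuous (V:=R_CompleteNormedModule)).
intros z _. apply continuity_pt_filterlim; auto. Qed.
Lemma RInt_swap_R (f : R -> R) a b : ex_RInt f a b -> RInt f b a = - RInt f a b.
Proof. intros H. symmetry. exact (opp_RInt_swap f a b H). Qed.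

Lemma PC_cc_int A g f : 0 <= A -> PC A g -> cont_on_cc A f -> ex_RInt (fun a => g a * f a) 0 A.
Proof.
intros HA Hg Hf. apply ex_RInt_ext with (fun a => g a * f (cl A a)).
{ intros x Hx. rewrite Rmin_left in Hx by lra. rewrite Rmax_right in Hx by lra.
  rewrite cl_id; auto; lra. }
apply PC_ex_RInt. apply PC_mul; auto. apply cc_clamp; auto.
Qed.

Lemma strip_eps A x a t : cont_strip A x -> 0 <= a <= A -> 0 <= t -> forall eps, 0 < eps ->
  exists d, 0 < d /\ forall a' t', 0 <= a' <= A -> 0 <= t' -> Rabs (a' - a) < d -> Rabs (t' - t) < d ->
    Rabs (x a' t' - x a t) < eps.
Proof.
intros H Ha Ht eps Heps. specialize (H a t Ha Ht).
destruct (proj1 (filterlim_locally _ _) H (mkposreal eps Heps)) as [d Hd].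
exists d; split; [apply cond_pos|]. intros a' t' Ha' Ht' H1 H2.
apply (Hd (a', t')). split; assumption. simpl; auto.
Qed.

Lemma unif_t A x t : 0 <= A -> cont_strip A x -> 0 <= t -> forall eps, 0 < eps ->
  exists d, 0 < d /\ forall a t', 0 <= a <= A -> 0 <= t' -> Rabs (t' - t) < d ->
    Rabs (x a t' - x a t) < eps.
Proof.
intros HA H Ht eps Heps.
assert (He2 : 0 < eps / 2) by lra.
assert (Hex : forall a, {d : posreal | forall a' t', 0 <= a' <= A -> 0 <= t' -> Rabs (a' - cl A a) < d -> Rabs (t' - t) < d ->
    Rabs (x a' t' - x (cl A a) t) < eps / 2}).
{ intros a. apply constructive_indefinite_description.
  destruct (strip_eps A x (cl A a) t H (cl_range A a HA) Ht _ He2) as [d [Hd H']].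
  exists (mkposreal d Hd). exact H'. }
set (delta := fun a => proj1_sig (Hex a)).
destruct (compactness_value_1d 0 A delta) as [d Hd].
exists d; split; [apply cond_pos|]. intros a t' Ha Ht' Htt.
apply NNPP. intros Hn. apply (Hd a Ha). intros [a0 [Ha0 [H1 H2]]]. apply Hn.
pose proof (proj2_sig (Hex a0)) as P. fold (delta a0) in P.
set (dd := delta a0) in *. clearbody dd. rewrite (cl_id A a0 Ha0) in P.
assert (P1 : Rabs (x a t' - x a0 t) < eps / 2).
{ apply P; auto. lra. }
assert (P2 : Rabs (x a t - x a0 t) < eps / 2).
{ apply P; auto; rewrite Rminus_diag, Rabs_R0; apply cond_pos. }
replace (x a t' - x a t) with ((x a t' - x a0 t) - (x a t - x a0 t)) by ring.
eapply Rle_lt_trans. apply Rabs_triang. rewrite Rabs_Ropp. lra.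
Qed.

Lemma F_cont A g x : 0 <= A -> PC A g -> (forall a, 0 <= a <= A -> 0 <= g a) ->
  cont_strip A x -> (forall t, 0 <= t -> cont_on_cc A (fun a => x a t)) ->
  forall t, 0 <= t -> forall eps, 0 < eps -> exists d, 0 < d /\ forall t', 0 <= t' -> Rabs (t' - t) < d ->
    Rabs (RInt (fun a => g a * x a t') 0 A - RInt (fun a => g a * x a t) 0 A) < eps.
Proof.
intros HA Hg Hg0 Hx Hxa t Ht eps Heps.
set (S := RInt g 0 A).
assert (HS : 0 <= S). { apply RInt_ge_0; auto. apply PC_ex_RInt; auto. intros; apply Hg0; lra. }
assert (He : 0 < eps / (S + 1)) by (apply Rdiv_lt_0_compat; lra).
destruct (unif_t A x t HA Hx Ht _ He) as [d [Hd H']].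
exists d; split; auto. intros t' Ht' Htt.
assert (I1 := PC_cc_int A g _ HA Hg (Hxa t' Ht')).
assert (I2 := PC_cc_int A g _ HA Hg (Hxa t Ht)).
assert (Ig := PC_ex_RInt A g Hg).
rewrite <- RInt_minus_R by auto.
assert (Hb : forall a, 0 < a < A -> Rabs (x a t' - x a t) < eps / (S + 1)) by (intros; apply H'; auto; lra).
apply Rle_lt_trans with (eps / (S + 1) * S).
2:{ apply Rlt_le_trans with (eps / (S+1) * (S + 1)). apply Rmult_lt_compat_l; lra. right; field; lra. }
set (e := eps / (S + 1)) in *.
assert (Ieg : ex_RInt (fun a => e * g a) 0 A) by (apply ex_RInt_scal_R; auto).
assert (Imeg : ex_RInt (fun a => (- e) * g a) 0 A) by (apply ex_RInt_scal_R; auto).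
assert (Idf : ex_RInt (fun a => g a * x a t' - g a * x a t) 0 A) by (apply ex_RInt_minus_R; auto).
apply Rabs_le. split.
- replace (- (e * S)) with (- e * S) by ring. unfold S. rewrite <- RInt_scal_R by auto.
  apply RInt_le; auto. intros a Ha. pose proof (Hb a Ha) as Q. apply Rabs_def2 in Q.
  assert (0 <= g a) by (apply Hg0; lra). nra.
- unfold S. rewrite <- RInt_scal_R by auto.
  apply RInt_le; auto. intros a Ha. pose proof (Hb a Ha) as Q. apply Rabs_def2 in Q.
  assert (0 <= g a) by (apply Hg0; lra). nra.
Qed.

Lemma RInt_ext_R (f g : R -> R) a b : (forall x, Rmin a b < x < Rmax a b -> f x = g x) ->
  RInt f a b = RInt g a b.
Proof. intros H. apply RInt_ext. exact H. Qed.
Lemma ex_RInt_ext_R (f g : R -> R) a b : (forall x, Rmin a b < x < Rmax a b -> f x = g x) ->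
  ex_RInt f a b -> ex_RInt g a b.
Proof. intros H. apply ex_RInt_ext. exact H. Qed.

Lemma abs_RInt_bound (f : R -> R) a b M : ex_RInt f a b ->
  (forall t, Rmin a b <= t <= Rmax a b -> Rabs (f t) <= M) -> Rabs (RInt f a b) <= M * Rabs (b - a).
Proof.
intros H HM. destruct (Rle_dec a b).
- rewrite Rmin_left, Rmax_right in HM by lra. rewrite (Rabs_right (b - a)) by lra.
  rewrite Rmult_comm. apply abs_RInt_le_const; auto.
- rewrite Rmin_right, Rmax_left in HM by lra.
  replace (RInt f a b) with (- RInt f b a) by (rewrite (RInt_swap_R f b a); [ring| apply ex_RInt_swap; auto]).
  rewrite Rabs_Ropp. rewrite (Rabs_left (b - a)) by lra. replace (- (b - a)) with (a - b) by ring.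
  rewrite Rmult_comm. apply abs_RInt_le_const; auto. lra. apply ex_RInt_swap; auto.
Qed.

Lemma int_bound (f : R -> R) a b : ex_RInt f a b -> exists M, 0 <= M /\
  forall t, Rmin a b <= t <= Rmax a b -> Rabs (f t) <= M.
Proof.
intros H. destruct (ex_RInt_ub f a b H) as [M HM]. exists (Rmax 0 M). split. apply Rmax_l.
intros t Ht. eapply Rle_trans. apply (HM t Ht). apply Rmax_r.
Qed.

Lemma int_clamp_lip (f : R -> R) p q : p <= q -> ex_RInt f p q ->
  exists M, forall y z, Rabs (RInt f p (Rmax p (Rmin q y)) - RInt f p (Rmax p (Rmin q z))) <= M * Rabs (y - z).
Proof.
intros Hpq H. destruct (int_bound f p q H) as [M [HM0 HM]].
rewrite Rmin_left, Rmax_right in HM by lra.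
exists M. intros y z.
set (cy := Rmax p (Rmin q y)). set (cz := Rmax p (Rmin q z)).
assert (Hcy : p <= cy <= q) by (unfold cy, Rmax, Rmin; repeat destruct Rle_dec; lra).
assert (Hcz : p <= cz <= q) by (unfold cz, Rmax, Rmin; repeat destruct Rle_dec; lra).
assert (Hl : Rabs (cy - cz) <= Rabs (y - z)).
{ unfold cy, cz, Rmax, Rmin; repeat destruct Rle_dec; unfold Rabs; repeat destruct Rcase_abs; lra. }
assert (Es : forall a b, p <= a <= q -> p <= b <= q -> ex_RInt f a b).
{ intros a b Ha Hb. destruct (Rle_dec a b).
  apply (ex_RInt_Chasles_2 (V:=R_CompleteNormedModule)) with p. lra.
  apply (ex_RInt_Chasles_1 (V:=R_CompleteNormedModule)) with q. lra. auto.
  apply ex_RInt_swap.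
  apply (ex_RInt_Chasles_2 (V:=R_CompleteNormedModule)) with p. lra.
  apply (ex_RInt_Chasles_1 (V:=R_CompleteNormedModule)) with q. lra. auto. }
rewrite <- (RInt_Chasles_R f p cz cy) by (apply Es; lra).
assert (E : forall u v : R, u + v - u = v) by (intros; ring). rewrite E.
eapply Rle_trans. apply abs_RInt_bound. apply Es; lra.
intros t Ht. apply HM. split.
eapply Rle_trans; [|apply Ht]. apply Rmin_glb; lra.
eapply Rle_trans; [apply Ht|]. apply Rmax_lub; lra.
apply Rmult_le_compat_l; auto.
Qed.

Lemma piece_FTC (F f : R -> R) p q : p < q -> ex_RInt f p q -> (forall y, continuity_pt F y) ->
  (forall x, p < x < q -> is_derive F x (f x) /\ continuous f x) ->
  F q - F p = RInt f p q.
Proof.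
intros Hpq Hf HF Hd.
set (H := fun y => F y - RInt f p (Rmax p (Rmin q y))).
destruct (int_clamp_lip f p q (Rlt_le _ _ Hpq) Hf) as [M HM].
assert (Hc : forall y, continuity_pt H y).
{ intros y. apply continuity_pt_minus. apply HF. apply lip_cont with M. apply HM. }
destruct (MVT_gen H p q (fun _ => 0)) as [c [_ Hc']].
{ intros x Hx. rewrite Rmin_left in Hx by lra. rewrite Rmax_right in Hx by lra.
  destruct (Hd x Hx) as [Hd1 Hd2].
  replace 0 with (f x - f x) by ring.
  apply is_derive_ext_loc with (fun y => F y - RInt f p y).
  { exists (mkposreal (Rmin (x - p) (q - x)) ltac:(apply Rmin_glb_lt; lra)).
    intros y Hy. change (Rabs (y - x) < Rmin (x - p) (q - x)) in Hy.
    assert (Rabs (y - x) < x - p) by (eapply Rlt_le_trans; [exact Hy|apply Rmin_l]).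
    assert (Rabs (y - x) < q - x) by (eapply Rlt_le_trans; [exact Hy|apply Rmin_r]).
    unfold H. replace (Rmax p (Rmin q y)) with y. reflexivity.
    unfold Rmax, Rmin; repeat destruct Rle_dec; auto;
    unfold Rabs in *; destruct Rcase_abs; lra. }
  apply (is_derive_minus F (RInt f p)); auto.
  apply (is_derive_RInt f (RInt f p) p x); auto.
  exists (mkposreal (Rmin (x - p) (q - x)) ltac:(apply Rmin_glb_lt; lra)).
  intros y Hy. change (Rabs (y - x) < Rmin (x - p) (q - x)) in Hy.
  assert (Rabs (y - x) < x - p) by (eapply Rlt_le_trans; [exact Hy|apply Rmin_l]).
  assert (Rabs (y - x) < q - x) by (eapply Rlt_le_trans; [exact Hy|apply Rmin_r]).
  refine (RInt_correct (V:=R_CompleteNormedModule) f p y _).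
  apply (ex_RInt_Chasles_1 (V:=R_CompleteNormedModule)) with q; auto.
  unfold Rabs in *; destruct Rcase_abs; lra. }
{ intros x _. apply Hc. }
unfold H in Hc'. rewrite Rmult_0_l in Hc'.
replace (Rmax p (Rmin q q)) with q in Hc' by (unfold Rmax, Rmin; repeat destruct Rle_dec; lra).
replace (Rmax p (Rmin q p)) with p in Hc' by (unfold Rmax, Rmin; repeat destruct Rle_dec; lra).
rewrite (RInt_point p f) in Hc'. change (zero : R) with 0 in Hc'. lra.
Qed.

Lemma part_mono A p n : partition A p n -> forall i j, (i <= j <= n)%nat -> p i <= p j.
Proof.
intros [_ [_ Hinc]] i j. induction j; intros Hij.
- assert (i = 0%nat) by lia. subst. lra.
- destruct (Nat.eq_dec i (S j)). subst. lra.
  eapply Rle_trans. apply IHj. lia. left. apply Hinc. lia.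
Qed.

Lemma part_range A p n : partition A p n -> forall i, (i <= n)%nat -> 0 <= p i <= A.
Proof.
intros Hp i Hi. pose proof Hp as [H0 [Hn _]]. split.
rewrite <- H0. apply (part_mono A p n Hp). lia.
rewrite <- Hn. apply (part_mono A p n Hp). lia.
Qed.

Lemma PFTC A p n (F f : R -> R) : partition A p n -> (forall y, continuity_pt F y) ->
  ex_RInt f 0 A ->
  (forall i, (i < n)%nat -> forall x, p i < x < p (S i) -> is_derive F x (f x) /\ continuous f x) ->
  F A - F 0 = RInt f 0 A.
Proof.
intros Hp HF Hf Hd. pose proof Hp as [H0 [Hn Hinc]].
assert (forall j, (j <= n)%nat -> F (p j) - F 0 = RInt f 0 (p j)).
{ induction j; intros Hj. rewrite H0. assert (Z : RInt f 0 0 = 0) by exact (RInt_point 0 f). rewrite Z, Rminus_diag. reflexivity.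
  pose proof (part_range A p n Hp j ltac:(lia)). pose proof (part_range A p n Hp (S j) Hj).
  rewrite <- (RInt_Chasles_R f 0 (p j) (p (S j))).
  rewrite <- IHj by lia. rewrite <- (piece_FTC F f (p j) (p (S j))). ring.
  apply Hinc; lia. apply int_sub with A; auto. auto. intros; apply (Hd j); auto; lia.
  apply int_sub with A; auto; lra. apply int_sub with A; auto. }
rewrite <- Hn. apply H; lia.
Qed.

Lemma PCint A h g : PC A h -> (forall x, continuity_pt g x) -> ex_RInt (fun a => h a * g a) 0 A.
Proof. intros. apply PC_ex_RInt. apply PC_mul; auto. Qed.

Lemma sandwich A h q e : 0 <= A -> ex_RInt h 0 A -> ex_RInt (fun a => h a * q a) 0 A ->
  (forall a, 0 < a < A -> 0 <= h a) -> (forall a, 0 < a < A -> Rabs (q a) <= e) ->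
  Rabs (RInt (fun a => h a * q a) 0 A) <= e * RInt h 0 A.
Proof.
intros HA Ih Ihq Hh Hq.
assert (Ieg : ex_RInt (fun a => e * h a) 0 A) by (apply ex_RInt_scal_R; auto).
assert (Imeg : ex_RInt (fun a => (- e) * h a) 0 A) by (apply ex_RInt_scal_R; auto).
apply Rabs_le. split.
- replace (- (e * RInt h 0 A)) with (- e * RInt h 0 A) by ring. rewrite <- RInt_scal_R by auto.
  apply RInt_le; auto. intros a Ha. pose proof (Hq a Ha) as Q. apply Rabs_le_between in Q.
  pose proof (Hh a Ha). nra.
- rewrite <- RInt_scal_R by auto.
  apply RInt_le; auto. intros a Ha. pose proof (Hq a Ha) as Q. apply Rabs_le_between in Q.
  pose proof (Hh a Ha). nra.
Qed.

Lemma Psi_deriv (psi : R -> R) y : (forall x, continuity_pt psi x) ->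
  is_derive (fun z => RInt psi 0 z) y (psi y).
Proof.
intros Hc. apply (is_derive_RInt psi (fun z => RInt psi 0 z) 0 y).
- exists (mkposreal 1 Rlt_0_1). intros z _.
  refine (RInt_correct (V:=R_CompleteNormedModule) psi 0 z _). apply ex_RInt_cont_R; auto.
- apply continuity_pt_filterlim; auto.
Qed.

Lemma Psi_cont (psi : R -> R) y : (forall x, continuity_pt psi x) ->
  continuity_pt (fun z => RInt psi 0 z) y.
Proof.
intros Hc. apply derivable_continuous_pt. exists (psi y).
apply is_derive_Reals. apply Psi_deriv; auto.
Qed.

Lemma incr_bound (psi : R -> R) y eta e : (forall x, continuity_pt psi x) ->
  eta <> 0 -> (forall tau, Rmin y (y + eta) <= tau <= Rmax y (y + eta) -> Rabs (psi tau - psi y) <= e) ->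
  Rabs ((RInt psi 0 (y + eta) - RInt psi 0 y) / eta - psi y) <= e.
Proof.
intros Hc Heta Hb.
assert (E1 : RInt psi 0 (y + eta) - RInt psi 0 y = RInt psi y (y + eta)).
{ rewrite <- (RInt_Chasles_R psi 0 y (y + eta)) by (apply ex_RInt_cont_R; auto). ring. }
rewrite E1.
assert (E2 : RInt psi y (y + eta) - eta * psi y = RInt (fun tau => psi tau - psi y) y (y + eta)).
{ rewrite RInt_minus_R. rewrite RInt_const_R. ring. apply ex_RInt_cont_R; auto.
  apply ex_RInt_const. }
replace (RInt psi y (y + eta) / eta - psi y) with ((RInt psi y (y + eta) - eta * psi y) / eta) by (field; auto).
rewrite E2. unfold Rdiv. rewrite Rabs_mult, Rabs_inv.
assert (Hb' := abs_RInt_bound (fun tau => psi tau - psi y) y (y + eta) e).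
replace (y + eta - y) with eta in Hb' by ring.
pose proof (Rabs_pos_lt eta Heta).
apply Rle_trans with (e * Rabs eta * / Rabs eta).
apply Rmult_le_compat_r. left; apply Rinv_0_lt_compat; auto.
apply Hb'. apply ex_RInt_minus_R. apply ex_RInt_cont_R; auto. apply ex_RInt_const. auto.
right. field. lra.
Qed.

Lemma param_deriv A h psi t : 0 < A -> PC A h -> (forall a, 0 <= a <= A -> 0 <= h a) ->
  (forall x, continuity_pt psi x) ->
  derivable_pt_lim (fun s => RInt (fun a => h a * RInt psi 0 (s - a)) 0 A) t
    (RInt (fun a => h a * psi (t - a)) 0 A).
Proof.
intros HA Hh Hh0 Hc eps Heps.
set (S := RInt h 0 A).
assert (Ih : ex_RInt h 0 A) by (apply PC_ex_RInt; auto).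
assert (HS : 0 <= S) by (apply RInt_ge_0; auto; lra || (intros; apply Hh0; lra)).
set (e := eps / (2 * (S + 1))).
assert (He : 0 < e) by (apply Rdiv_lt_0_compat; lra).
destruct (Heine psi (fun c => t - A - 1 <= c <= t + 1) (compact_P3 _ _) (fun x _ => Hc x) (mkposreal e He)) as [d0 Hd0].
assert (Hd : 0 < Rmin d0 1) by (apply Rmin_glb_lt; [apply cond_pos|lra]).
exists (mkposreal _ Hd). intros eta Heta Heta'. simpl in Heta'.
assert (Heta1 : Rabs eta < d0) by (eapply Rlt_le_trans; [exact Heta'|apply Rmin_l]).
assert (Heta2 : Rabs eta < 1) by (eapply Rlt_le_trans; [exact Heta'|apply Rmin_r]).
assert (HcP : forall s, continuity_pt (fun a => RInt psi 0 (s - a)) 0 -> True) by auto.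
assert (CP : forall s x, continuity_pt (fun a => RInt psi 0 (s - a)) x).
{ intros s x. apply (continuity_pt_comp (fun a => s - a) (fun z => RInt psi 0 z)).
  apply continuity_pt_minus. apply continuity_pt_const. intros u v; auto. apply continuity_pt_id.
  apply Psi_cont; auto. }
assert (CQ : forall s x, continuity_pt (fun a => psi (s - a)) x).
{ intros s x. apply (continuity_pt_comp (fun a => s - a) psi).
  apply continuity_pt_minus. apply continuity_pt_const. intros u v; auto. apply continuity_pt_id.
  auto. }
set (q := fun a => (RInt psi 0 ((t + eta) - a) - RInt psi 0 (t - a)) / eta - psi (t - a)).
assert (I1 : ex_RInt (fun a => h a * RInt psi 0 ((t + eta) - a)) 0 A) by (apply PCint; auto).
assert (I0 : ex_RInt (fun a => h a * RInt psi 0 (t - a)) 0 A) by (apply PCint; auto).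
assert (IQ : ex_RInt (fun a => h a * psi (t - a)) 0 A) by (apply PCint; auto).
assert (E : (RInt (fun a => h a * RInt psi 0 ((t + eta) - a)) 0 A - RInt (fun a => h a * RInt psi 0 (t - a)) 0 A) / eta
   - RInt (fun a => h a * psi (t - a)) 0 A = RInt (fun a => h a * q a) 0 A).
{ rewrite (RInt_ext_R (fun a => h a * q a) (fun a => / eta * (h a * RInt psi 0 ((t + eta) - a)) - / eta * (h a * RInt psi 0 (t - a)) - h a * psi (t - a))).
  2:{ intros x _. unfold q. field. auto. }
  rewrite RInt_minus_R; [|apply ex_RInt_minus_R; apply ex_RInt_scal_R; auto|auto].
  rewrite RInt_minus_R; [|apply ex_RInt_scal_R; auto|apply ex_RInt_scal_R; auto].
  rewrite !RInt_scal_R by auto. field. auto. }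
rewrite E.
apply Rle_lt_trans with (e * S).
- apply sandwich. lra. exact Ih.
  apply ex_RInt_ext_R with (fun a => / eta * (h a * RInt psi 0 ((t + eta) - a)) - / eta * (h a * RInt psi 0 (t - a)) - h a * psi (t - a)).
  { intros x _. unfold q. field. auto. }
  apply ex_RInt_minus_R; auto. apply ex_RInt_minus_R; apply ex_RInt_scal_R; auto.
  intros a Ha; apply Hh0; lra.
  intros a Ha. unfold q. replace (t + eta - a) with ((t - a) + eta) by ring.
  apply incr_bound; auto. intros tau Htau. left.
  assert (Ht1 : Rabs (tau - (t - a)) <= Rabs eta).
  { revert Htau. unfold Rmin, Rmax; repeat destruct Rle_dec; intros; unfold Rabs;
    repeat destruct Rcase_abs; lra. }
  apply Hd0.
  + revert Htau. unfold Rmin, Rmax; repeat destruct Rle_dec; intros;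
    unfold Rabs in Heta2; destruct Rcase_abs in Heta2; lra.
  + lra.
  + lra.
- apply Rlt_le_trans with (e * (S + 1)). apply Rmult_lt_compat_l; [exact He|lra].
  unfold e. apply Rle_trans with (eps / 2). right; field; lra. lra.
Qed.

Lemma pos_cont0 A f : 0 < A -> (forall x, continuity_pt f x) -> (forall a, 0 <= a <= A -> 0 <= f a) ->
  0 < f 0 -> 0 < RInt f 0 A.
Proof.
intros HA Hc Hp H0.
destruct (cont_pt_eps f 0 (Hc 0) (f 0 / 2) ltac:(lra)) as [d [Hd H']].
set (d' := Rmin (d / 2) A).
assert (Hd' : 0 < d' <= A) by (unfold d'; split; [apply Rmin_glb_lt; lra|apply Rmin_r]).
assert (Hd2 : d' <= d / 2) by apply Rmin_l.
rewrite <- (RInt_Chasles_R f 0 d' A) by (apply ex_RInt_cont_R; auto).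
assert (0 <= RInt f d' A) by (apply RInt_ge_0; [lra|apply ex_RInt_cont_R; auto|intros; apply Hp; lra]).
assert (d' * (f 0 / 2) <= RInt f 0 d').
{ replace (d' * (f 0 / 2)) with (RInt (fun _ => f 0 / 2) 0 d') by (rewrite RInt_const_R; reqR; ring).
  apply RInt_le. lra. apply ex_RInt_const. apply ex_RInt_cont_R; auto.
  intros x Hx. assert (Hx0 : Rabs (x - 0) < d) by (rewrite Rminus_0_r, Rabs_right; lra).
  specialize (H' x Hx0). apply Rabs_def2 in H'. lra. }
assert (0 < d' * (f 0 / 2)) by (apply Rmult_lt_0_compat; lra).
lra.
Qed.

Lemma pos_min A g f : 0 < A -> PC A g -> (forall a, 0 <= a <= A -> 0 <= g a) -> 0 < RInt g 0 A ->
  cont_on_cc A f -> (forall a, 0 <= a <= A -> 0 < f a) -> 0 < RInt (fun a => g a * f a) 0 A.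
Proof.
intros HA Hg Hg0 HgI Hf Hf0.
destruct (continuity_ab_min (fun z => f (cl A z)) 0 A ltac:(lra) (fun c _ => cc_clamp A f ltac:(lra) Hf c)) as [mx [Hmx Hmx']].
set (m := f (cl A mx)).
assert (Hm : 0 < m) by (apply Hf0; apply cl_range; lra).
apply Rlt_le_trans with (m * RInt g 0 A). apply Rmult_lt_0_compat; auto.
rewrite <- RInt_scal_R by (apply PC_ex_RInt; auto).
apply RInt_le. lra. apply ex_RInt_scal_R; apply PC_ex_RInt; auto. apply PC_cc_int; auto; lra.
intros x Hx. specialize (Hmx x ltac:(lra)). rewrite (cl_id A x) in Hmx by lra.
assert (0 <= g x) by (apply Hg0; lra). unfold m. nra.
Qed.

Lemma cp_mult (f g : R -> R) x : continuity_pt f x -> continuity_pt g x -> continuity_pt (fun y => f y * g y) x.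
Proof. intros; apply continuity_pt_mult; auto. Qed.
Lemma cp_plus (f g : R -> R) x : continuity_pt f x -> continuity_pt g x -> continuity_pt (fun y => f y + g y) x.
Proof. intros; apply continuity_pt_plus; auto. Qed.
Lemma cp_minus (f g : R -> R) x : continuity_pt f x -> continuity_pt g x -> continuity_pt (fun y => f y - g y) x.
Proof. intros; apply continuity_pt_minus; auto. Qed.
Lemma cp_const (c x : R) : continuity_pt (fun _ => c) x.
Proof. apply continuity_pt_const. intros u v; auto. Qed.
Lemma cp_id x : continuity_pt (fun y => y) x.
Proof. apply continuity_pt_id. Qed.
Lemma cp_exp (f : R -> R) x : continuity_pt f x -> continuity_pt (fun y => exp (f y)) x.
Proof. intros. apply (continuity_pt_comp f exp); auto. apply derivable_continuous_pt. apply derivable_pt_exp. Qed.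
Lemma cp_ln (f : R -> R) x : 0 < f x -> continuity_pt f x -> continuity_pt (fun y => ln (f y)) x.
Proof. intros. apply (continuity_pt_comp f ln); auto. apply derivable_continuous_pt. exists (/ f x). apply derivable_pt_lim_ln; auto. Qed.
Lemma cp_inv (f : R -> R) x : f x <> 0 -> continuity_pt f x -> continuity_pt (fun y => / f y) x.
Proof. intros. apply (continuity_pt_inv f); auto. Qed.
Lemma cp_ext (f g : R -> R) x : (forall y, f y = g y) -> continuity_pt f x -> continuity_pt g x.
Proof. intros H. replace g with f; auto. apply functional_extensionality; auto. Qed.

Lemma RInt_shift (f : R -> R) v s : ex_RInt f v (v + s) ->
  RInt (fun r => f (v + r)) 0 s = RInt f v (v + s).
Proof.
intros H. assert (H' : ex_RInt f (1 * 0 + v) (1 * s + v)).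
{ replace (1 * 0 + v) with v by ring. replace (1 * s + v) with (v + s) by ring. auto. }
pose proof (RInt_comp_lin f 1 v 0 s H') as E.
replace (1 * 0 + v) with v in E by ring. replace (1 * s + v) with (v + s) in E by ring.
rewrite <- E. apply RInt_ext_R. intros y _. change (f (v + y) = 1 * f (1 * y + v)).
replace (1 * y + v) with (v + y) by ring. ring.
Qed.

Lemma ex_RInt_shift (f : R -> R) v s : ex_RInt f v (v + s) ->
  ex_RInt (fun r => f (v + r)) 0 s.
Proof.
intros H. assert (H' : ex_RInt f (1 * 0 + v) (1 * s + v)).
{ replace (1 * 0 + v) with v by ring. replace (1 * s + v) with (v + s) by ring. auto. }
pose proof (ex_RInt_comp_lin f 1 v 0 s H') as E.
apply ex_RInt_ext_R with (2 := E). intros y _. change (1 * f (1 * y + v) = f (v + y)).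
replace (1 * y + v) with (v + y) by ring. ring.
Qed.

Lemma hl_eps (F : R -> R) :
  (forall t, 0 <= t -> forall eps, 0 < eps -> exists d, 0 < d /\ forall s, 0 <= s -> Rabs (s - t) < d -> Rabs (F s - F t) < eps) ->
  forall y, continuity_pt (fun z => F (Rmax 0 z)) y.
Proof.
intros H y. apply eps_cont_pt. intros eps Heps.
destruct (H (Rmax 0 y) (Rmax_l _ _) eps Heps) as [d [Hd H']].
exists d; split; auto. intros z Hz. apply H'. apply Rmax_l.
eapply Rle_lt_trans; [|exact Hz]. unfold Rmax; repeat destruct Rle_dec;
  unfold Rabs; repeat destruct Rcase_abs; lra.
Qed.

Lemma lip1_comp (f g : R -> R) y : (forall x, continuity_pt f x) ->
  (forall a b, Rabs (g a - g b) <= Rabs (a - b)) -> continuity_pt (fun z => f (g z)) y.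
Proof.
intros Hf Hg. apply (continuity_pt_comp g f). apply lip_cont with 1. intros; rewrite Rmult_1_l; auto.
apply Hf.
Qed.

Definition m1 (A s : R) := Rmax 0 (- Rmax (- A) s).
Definition m2 (A s : R) := Rmax 0 (Rmax (- A) s).
Lemma m1_lip A a b : Rabs (m1 A a - m1 A b) <= Rabs (a - b).
Proof. unfold m1, Rmax; repeat destruct Rle_dec; unfold Rabs; repeat destruct Rcase_abs; lra. Qed.
Lemma m2_lip A a b : Rabs (m2 A a - m2 A b) <= Rabs (a - b).
Proof. unfold m2, Rmax; repeat destruct Rle_dec; unfold Rabs; repeat destruct Rcase_abs; lra. Qed.
Lemma m1_range A s : 0 <= A -> 0 <= m1 A s <= A.
Proof. intros. unfold m1, Rmax; repeat destruct Rle_dec; lra. Qed.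
Lemma m2_range A s : 0 <= m2 A s.
Proof. unfold m2. apply Rmax_l. Qed.

Section Species.
Variables (A : R) (mu k u F : R -> R) (zeta c : R) (x : R -> R -> R).
Hypothesis HA : 0 < A.
Hypothesis Hmu : admissible A mu.
Hypothesis Hk : admissible A k.
Hypothesis Hz : is_zeta A mu k zeta.
Hypothesis Hc : 0 < c.
Hypothesis Hx : cont_strip A x.
Hypothesis HxF : forall t, 0 <= t -> in_F A k (fun a => x a t).
Hypothesis Hch : char_sol A mu u F x.
Hypothesis HG : forall y, continuity_pt (fun s => u (Rmax 0 s) + F (Rmax 0 s)) y.

Let Gh (s : R) : R := u (Rmax 0 s) + F (Rmax 0 s).
Let I (a : R) : R := RInt (fun s => mu s + zeta) 0 a.
Let Ih (y : R) : R := I (cl A y).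
Let kh (a : R) : R := k a * exp (- Ih a).
Let Kh (y : R) : R := RInt kh (cl A y) A.
Let W (a t : R) : R := x a t * exp (I a - zeta * t + RInt Gh 0 t) / c.

Lemma mz_int : ex_RInt (fun s => mu s + zeta) 0 A.
Proof. apply ex_RInt_plus_R. apply PC_ex_RInt. apply Hmu. apply ex_RInt_const. Qed.

Lemma mu_int : ex_RInt mu 0 A.
Proof. apply PC_ex_RInt. apply Hmu. Qed.

Lemma Ih_cont : forall y, continuity_pt Ih y.
Proof.
intros y. destruct (int_clamp_lip (fun s => mu s + zeta) 0 A ltac:(lra) mz_int) as [M HM].
apply lip_cont with M. intros a b. apply HM.
Qed.

Lemma kh_PC : PC A kh.
Proof.
apply PC_mul. apply Hk. intros y. apply (continuity_pt_comp (fun a => - Ih a) exp).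
apply (continuity_pt_opp Ih). apply Ih_cont.
apply derivable_continuous_pt. apply derivable_pt_exp.
Qed.

Lemma kh_int : ex_RInt kh 0 A.
Proof. apply PC_ex_RInt. apply kh_PC. Qed.

Lemma k_nonneg : forall a, 0 <= a <= A -> 0 <= k a.
Proof. apply Hk. Qed.

Lemma kh_nonneg : forall a, 0 <= a <= A -> 0 <= kh a.
Proof. intros a Ha. unfold kh. pose proof (exp_pos (- Ih a)). pose proof (k_nonneg a Ha). nra. Qed.

Lemma Ih_eq : forall a, 0 <= a <= A -> Ih a = I a.
Proof. intros a Ha. unfold Ih. rewrite cl_id; auto. Qed.

Lemma kh_eq : forall a, 0 <= a <= A -> kh a = ktilde mu k zeta a.
Proof. intros a Ha. unfold kh, ktilde. rewrite Ih_eq; auto. Qed.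

Lemma kh_one : RInt kh 0 A = 1.
Proof.
rewrite <- Hz. apply RInt_ext_R. intros y Hy. rewrite Rmin_left, Rmax_right in Hy by lra.
unfold kh. rewrite Ih_eq by lra. reflexivity.
Qed.

Lemma I_sub : forall a b, 0 <= a <= A -> 0 <= b <= A -> ex_RInt (fun s => mu s + zeta) a b.
Proof. intros. apply int_sub with A; auto. apply mz_int. Qed.

Lemma kh_sub : forall a b, 0 <= a <= A -> 0 <= b <= A -> ex_RInt kh a b.
Proof. intros. apply int_sub with A; auto. apply kh_int. Qed.

Lemma Kh_alt : forall y, Kh y = RInt kh 0 A - RInt kh 0 (cl A y).
Proof.
intros y. unfold Kh. pose proof (cl_range A y ltac:(lra)).
rewrite <- (RInt_Chasles_R kh 0 (cl A y) A) by (apply kh_sub; lra). lra.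
Qed.

Lemma Kh_cont : forall y, continuity_pt Kh y.
Proof.
intros y. destruct (int_clamp_lip kh 0 A ltac:(lra) kh_int) as [M HM].
apply lip_cont with M. intros a b. rewrite !Kh_alt.
replace (RInt kh 0 A - RInt kh 0 (cl A a) - (RInt kh 0 A - RInt kh 0 (cl A b))) with
  (- (RInt kh 0 (cl A a) - RInt kh 0 (cl A b))) by ring.
rewrite Rabs_Ropp. apply HM.
Qed.

Lemma Kh_A : Kh A = 0.
Proof. unfold Kh. rewrite cl_id by lra. exact (RInt_point A kh). Qed.

Lemma Kh_0 : Kh 0 = 1.
Proof. unfold Kh. rewrite cl_id by lra. apply kh_one. Qed.

Lemma Kh_nonneg : forall y, 0 <= Kh y.
Proof.
intros y. unfold Kh. pose proof (cl_range A y ltac:(lra)). apply RInt_ge_0. lra.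
apply kh_sub; lra. intros; apply kh_nonneg; lra.
Qed.

Lemma Gh_int : forall a b, ex_RInt Gh a b.
Proof. intros. apply ex_RInt_cont_R. apply HG. Qed.

Lemma W_char : forall a t s, 0 <= a -> 0 <= t -> 0 <= s -> a + s <= A ->
  W (a + s) (t + s) = W a t.
Proof.
intros a t s Ha Ht Hs Has. unfold W. rewrite (Hch a t s Ha Ht Hs Has).
assert (E1 : RInt (fun r => mu (a + r) + u (t + r) + F (t + r)) 0 s = RInt mu a (a + s) + RInt Gh t (t + s)).
{ rewrite (RInt_ext_R _ (fun r => mu (a + r) + Gh (t + r))).
  2:{ intros r Hr. rewrite Rmin_left, Rmax_right in Hr by lra. unfold Gh.
      rewrite Rmax_right by lra. ring. }
  rewrite RInt_plus_R. rewrite RInt_shift. rewrite (RInt_shift Gh). reflexivity.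
  apply Gh_int. apply int_sub with A; auto; try lra. apply mu_int.
  apply ex_RInt_shift. apply int_sub with A; auto; try lra. apply mu_int.
  apply ex_RInt_shift. apply Gh_int. }
assert (E2 : I (a + s) = I a + RInt mu a (a + s) + zeta * s).
{ unfold I. rewrite <- (RInt_Chasles_R (fun s0 => mu s0 + zeta) 0 a (a + s)) by (apply I_sub; lra).
  assert (E : RInt (fun s0 => mu s0 + zeta) a (a + s) = RInt mu a (a + s) + RInt (fun _ => zeta) a (a + s)).
  { apply (RInt_plus_R mu (fun _ => zeta)). apply int_sub with A; auto; try lra. apply mu_int.
    apply ex_RInt_const. }
  rewrite E, RInt_const_R. lra. }
assert (E3 : RInt Gh 0 (t + s) = RInt Gh 0 t + RInt Gh t (t + s)).
{ rewrite <- (RInt_Chasles_R Gh 0 t (t + s)) by apply Gh_int. reflexivity. }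
rewrite E1, E2, E3. unfold Rdiv. rewrite (Rmult_assoc (x a t)). rewrite <- exp_plus.
f_equal. f_equal. f_equal. ring.
Qed.

Let phi (s : R) : R := W (m1 A s) (m2 A s).

Lemma W_phi : forall a t, 0 <= a <= A -> 0 <= t -> W a t = phi (t - a).
Proof.
intros a t Ha Ht. unfold phi, m1, m2. rewrite (Rmax_right (- A)) by lra.
destruct (Rle_dec a t).
- rewrite (Rmax_left 0 (- (t - a))) by lra. rewrite (Rmax_right 0 (t - a)) by lra.
  rewrite <- (W_char 0 (t - a) a) by lra. f_equal; ring.
- rewrite (Rmax_right 0 (- (t - a))) by lra. rewrite (Rmax_left 0 (t - a)) by lra.
  rewrite <- (W_char (- (t - a)) 0 t) by lra. f_equal; ring.
Qed.

Lemma x_pos : forall a t, 0 <= a <= A -> 0 <= t -> 0 < x a t.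
Proof. intros a t Ha Ht. destruct (HxF t Ht) as [_ [H _]]. auto. Qed.

Lemma x_cc : forall t, 0 <= t -> cont_on_cc A (fun a => x a t).
Proof. intros t Ht. destruct (HxF t Ht) as [[H _] _]. auto. Qed.

Lemma xm_cont : forall s0, continuity_pt (fun s => x (m1 A s) (m2 A s)) s0.
Proof.
intros s0. apply eps_cont_pt. intros eps Heps.
destruct (strip_eps A x (m1 A s0) (m2 A s0) Hx (m1_range A s0 ltac:(lra)) (m2_range A s0) eps Heps) as [d [Hd H']].
exists d; split; auto. intros s Hs. apply H'. apply m1_range; lra. apply m2_range.
eapply Rle_lt_trans. apply m1_lip. auto. eapply Rle_lt_trans. apply m2_lip. auto.
Qed.

Lemma phi_cont : forall s0, continuity_pt phi s0.
Proof.
intros s0.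
apply cp_ext with (fun s => x (m1 A s) (m2 A s) * exp (Ih (m1 A s) - zeta * m2 A s + RInt Gh 0 (m2 A s)) * / c).
{ intros s. unfold phi, W. rewrite Ih_eq by (apply m1_range; lra). unfold Rdiv. reflexivity. }
apply cp_mult; [|apply cp_const]. apply cp_mult. apply xm_cont.
apply cp_exp. apply cp_plus. apply cp_minus.
apply lip1_comp. apply Ih_cont. apply m1_lip.
apply cp_mult. apply cp_const. apply lip_cont with 1. intros; rewrite Rmult_1_l; apply m2_lip.
apply lip1_comp. intros; apply Psi_cont. apply HG. apply m2_lip.
Qed.

Lemma phi_pos : forall s, 0 < phi s.
Proof.
intros s. unfold phi, W. apply Rdiv_lt_0_compat; auto. apply Rmult_lt_0_compat. apply x_pos.
apply m1_range; lra. apply m2_range. apply exp_pos.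
Qed.

Lemma renewal : forall t, 0 <= t -> phi t = RInt (fun a => kh a * phi (t - a)) 0 A.
Proof.
intros t Ht. set (g := RInt Gh 0 t).
rewrite (RInt_ext_R _ (fun a => (exp (- zeta * t + g) / c) * (k a * x a t))).
2:{ intros a Ha. rewrite Rmin_left, Rmax_right in Ha by lra. rewrite <- W_phi by lra.
    unfold W, kh. rewrite Ih_eq by lra. fold g.
    assert (Ee : exp (- zeta * t + g) = exp (- I a) * exp (I a - zeta * t + g))
      by (rewrite <- exp_plus; f_equal; ring).
    rewrite Ee. field. lra. }
rewrite RInt_scal_R. 2:{ apply PC_cc_int. lra. apply Hk. apply x_cc; auto. }
destruct (HxF t Ht) as [_ [_ Hb]]. rewrite <- Hb.
replace t with (t - 0) at 1 by ring. rewrite <- W_phi by lra. unfold W. fold g.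
replace (I 0) with 0. replace (t - 0) with t by ring. replace (0 - zeta * t + g) with (- zeta * t + g) by ring. field. lra.
unfold I. symmetry. exact (RInt_point 0 (fun s => mu s + zeta)).
Qed.

Let Psi (s : R) : R := RInt phi 0 s.
Let D (t : R) : R := Psi t - RInt (fun a => kh a * Psi (t - a)) 0 A.
Let L (t : R) : R := RInt (fun a => Kh a * phi (t - a)) 0 A.

Lemma Psi_c : forall y, continuity_pt Psi y.
Proof. intros. apply Psi_cont. apply phi_cont. Qed.

Lemma Psi_d : forall y, derivable_pt_lim Psi y (phi y).
Proof. intros. apply is_derive_Reals. apply Psi_deriv. apply phi_cont. Qed.

Lemma shift_cont (f : R -> R) t y : (forall z, continuity_pt f z) -> continuity_pt (fun a => f (t - a)) y.
Proof.
intros Hf. apply (continuity_pt_comp (fun a => t - a) f). apply cp_minus. apply cp_const. apply cp_id. apply Hf.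
Qed.

Lemma kh_cont_at : forall y, continuity_pt k y -> continuity_pt kh y.
Proof.
intros y Hky. unfold kh. apply cp_mult; auto. apply cp_exp. apply (continuity_pt_opp Ih). apply Ih_cont.
Qed.

Lemma L_eq_D : forall t, L t = D t.
Proof.
intros t. destruct Hk as [[p [n [Hpart Hp]]] _].
set (FF := fun a => Kh a * Psi (t - a)).
set (f := fun a => - (kh a * Psi (t - a)) - Kh a * phi (t - a)).
assert (I1 : ex_RInt (fun a => kh a * Psi (t - a)) 0 A) by (apply PCint; [apply kh_PC|intros; apply shift_cont, Psi_c]).
assert (I2 : ex_RInt (fun a => Kh a * phi (t - a)) 0 A) by (apply ex_RInt_cont_R; intros; apply cp_mult; [apply Kh_cont|apply shift_cont, phi_cont]).
assert (Hf : ex_RInt f 0 A).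
{ unfold f. apply ex_RInt_minus_R; auto. apply (ex_RInt_opp (V:=R_NormedModule) (fun a => kh a * Psi (t - a))); auto. }
pose proof (PFTC A p n FF f Hpart) as P.
assert (E : FF A - FF 0 = RInt f 0 A).
{ apply P; auto.
  - intros y. unfold FF. apply cp_mult. apply Kh_cont. apply shift_cont, Psi_c.
  - intros i Hi y Hy.
    assert (Hy' : 0 < y < A).
    { pose proof (part_range A p n Hpart i ltac:(lia)). pose proof (part_range A p n Hpart (S i) ltac:(lia)). lra. }
    destruct (Hp i Hi) as [Hkc _]. specialize (Hkc y Hy).
    assert (Hkc' : continuity_pt k y) by (apply continuity_pt_filterlim; auto).
    split.
    + apply is_derive_Reals.
      assert (DK : derivable_pt_lim Kh y (- kh y)).
      { apply is_derive_Reals.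
        apply is_derive_ext_loc with (fun z => RInt kh z A).
        { exists (mkposreal (Rmin y (A - y)) ltac:(apply Rmin_glb_lt; lra)).
          intros z Hzz. change (Rabs (z - y) < Rmin y (A - y)) in Hzz.
          assert (Rabs (z - y) < y) by (eapply Rlt_le_trans; [exact Hzz|apply Rmin_l]).
          assert (Rabs (z - y) < A - y) by (eapply Rlt_le_trans; [exact Hzz|apply Rmin_r]).
          unfold Kh. rewrite cl_id. reflexivity. unfold Rabs in *; destruct Rcase_abs; lra. }
        apply (is_derive_RInt' kh (fun z => RInt kh z A) y A).
        { exists (mkposreal (Rmin y (A - y)) ltac:(apply Rmin_glb_lt; lra)).
          intros z Hzz. change (Rabs (z - y) < Rmin y (A - y)) in Hzz.
          assert (Rabs (z - y) < y) by (eapply Rlt_le_trans; [exact Hzz|apply Rmin_l]).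
          assert (Rabs (z - y) < A - y) by (eapply Rlt_le_trans; [exact Hzz|apply Rmin_r]).
          refine (RInt_correct (V:=R_CompleteNormedModule) kh z A _).
          apply kh_sub; unfold Rabs in *; destruct Rcase_abs; lra. }
        apply continuity_pt_filterlim. apply kh_cont_at; auto. }
      assert (DP : derivable_pt_lim (fun a => Psi (t - a)) y (phi (t - y) * (-1))).
      { apply (derivable_pt_lim_comp (fun a => t - a) Psi). 
        replace (-1) with (0 - 1) by ring. apply derivable_pt_lim_minus.
        apply derivable_pt_lim_const. apply derivable_pt_lim_id. apply Psi_d. }
      pose proof (derivable_pt_lim_mult Kh (fun a => Psi (t - a)) y _ _ DK DP) as DM.
      unfold f. replace (- (kh y * Psi (t - y)) - Kh y * phi (t - y)) with
        (- kh y * Psi (t - y) + Kh y * (phi (t - y) * -1)) by ring. exact DM.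
    + apply continuity_pt_filterlim. unfold f. apply cp_minus.
      apply (continuity_pt_opp (fun a => kh a * Psi (t - a))). apply cp_mult. apply kh_cont_at; auto.
      apply shift_cont, Psi_c. apply cp_mult. apply Kh_cont. apply shift_cont, phi_cont. }
unfold FF in E. rewrite Kh_A, Kh_0 in E. replace (t - 0) with t in E by ring.
unfold f in E. rewrite RInt_minus_R in E; auto.
2:{ apply (ex_RInt_opp (V:=R_NormedModule) (fun a => kh a * Psi (t - a))); auto. }
rewrite (RInt_opp (V:=R_CompleteNormedModule) (fun a => kh a * Psi (t - a))) in E; auto.
unfold L, D. change (opp (RInt (fun a => kh a * Psi (t - a)) 0 A)) with (- RInt (fun a => kh a * Psi (t - a)) 0 A) in E.
lra.
Qed.

Lemma D_deriv : forall t, derivable_pt_lim D t (phi t - RInt (fun a => kh a * phi (t - a)) 0 A).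
Proof.
intros t. apply derivable_pt_lim_minus. apply Psi_d.
apply param_deriv; auto. apply kh_PC. apply kh_nonneg. apply phi_cont.
Qed.

Lemma D_const : forall T, 0 <= T -> D T = D 0.
Proof.
intros T HT.
destruct (MVT_gen D 0 T (fun t => phi t - RInt (fun a => kh a * phi (t - a)) 0 A)) as [c0 [Hc0 Hm]].
{ intros y _. apply is_derive_Reals. apply D_deriv. }
{ intros y _. apply derivable_continuous_pt. eexists. apply D_deriv. }
rewrite Rmin_left, Rmax_right in Hc0 by lra.
rewrite <- renewal in Hm by lra. lra.
Qed.

Lemma L_const : forall T, 0 <= T -> L T = L 0.
Proof. intros. rewrite !L_eq_D. apply D_const; auto. Qed.

Lemma L0_pos : 0 < L 0.
Proof.
unfold L. apply pos_cont0; auto.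
- intros; apply cp_mult. apply Kh_cont. apply shift_cont, phi_cont.
- intros a Ha. pose proof (Kh_nonneg a). pose proof (phi_pos (0 - a)). nra.
- rewrite Kh_0. replace (0 - 0) with 0 by ring. rewrite Rmult_1_l. apply phi_pos.
Qed.

Lemma pi0_eq : forall a, 0 <= a <= A -> pi0 A mu k zeta a = exp (I a) * Kh a.
Proof.
intros a Ha. unfold pi0, Kh. rewrite cl_id by auto.
rewrite <- RInt_scal_R by (apply kh_sub; lra).
apply RInt_ext_R. intros s Hs. rewrite Rmin_left, Rmax_right in Hs by lra.
unfold kh. rewrite Ih_eq by lra.
assert (E : RInt (fun l => zeta + mu l) s a = I a - I s).
{ unfold I. rewrite <- (RInt_Chasles_R (fun s0 => mu s0 + zeta) 0 s a) by (apply I_sub; lra).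
  replace (fun l => zeta + mu l) with (fun s0 => mu s0 + zeta) by (apply functional_extensionality; intros; ring).
  lra. }
rewrite E. replace (I a - I s) with (I a + - I s) by ring. rewrite exp_plus. ring.
Qed.

Lemma xs_eq : forall a, xstar mu zeta c a = c * exp (- I a).
Proof.
intros a. unfold xstar, I.
replace (fun s => zeta + mu s) with (fun s => mu s + zeta) by (apply functional_extensionality; intros; ring).
reflexivity.
Qed.

Lemma x_W : forall a t, 0 <= a <= A -> 0 <= t ->
  x a t = c * exp (- I a) * exp (zeta * t - RInt Gh 0 t) * phi (t - a).
Proof.
intros a t Ha Ht. rewrite <- W_phi by auto. unfold W.
assert (Ee : exp (- I a) * exp (zeta * t - RInt Gh 0 t) * exp (I a - zeta * t + RInt Gh 0 t) = 1).
{ rewrite <- !exp_plus. replace (- I a + (zeta * t - RInt Gh 0 t) + (I a - zeta * t + RInt Gh 0 t)) with 0 by ring.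
  apply exp_0. }
field_simplify. 2: lra. rewrite <- (Rmult_1_r (x a t)) at 1. rewrite <- Ee. field.
Qed.

Lemma num_eq : forall t, 0 <= t ->
  RInt (fun a => pi0 A mu k zeta a * x a t) 0 A = c * exp (zeta * t - RInt Gh 0 t) * L t.
Proof.
intros t Ht. unfold L. rewrite <- RInt_scal_R.
2:{ apply ex_RInt_cont_R; intros; apply cp_mult; [apply Kh_cont|apply shift_cont, phi_cont]. }
apply RInt_ext_R. intros a Ha. rewrite Rmin_left, Rmax_right in Ha by lra.
rewrite pi0_eq by lra. rewrite x_W by lra.
assert (E : exp (I a) * exp (- I a) = 1) by (rewrite <- exp_plus; replace (I a + - I a) with 0 by ring; apply exp_0).
transitivity (exp (I a) * exp (- I a) * (c * exp (zeta * t - RInt Gh 0 t) * (Kh a * phi (t - a)))). ring.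
rewrite E; ring.
Qed.

Lemma akh_int : ex_RInt (fun a => a * kh a) 0 A.
Proof.
apply ex_RInt_ext_R with (fun a => kh a * a). intros; ring.
apply PCint. apply kh_PC. apply cp_id.
Qed.

Lemma den_eq : RInt (fun a => a * k a * xstar mu zeta c a) 0 A = c * RInt (fun a => a * kh a) 0 A.
Proof.
rewrite <- RInt_scal_R by apply akh_int.
apply RInt_ext_R. intros a Ha. rewrite Rmin_left, Rmax_right in Ha by lra.
rewrite xs_eq. unfold kh. rewrite Ih_eq by lra. ring.
Qed.

Lemma akh_eq : RInt (fun a => a * kh a) 0 A = RInt Kh 0 A.
Proof.
destruct Hk as [[p [n [Hpart Hp]]] _].
set (FF := fun a => a * Kh a).
set (f := fun a => Kh a - a * kh a).
assert (IK : ex_RInt Kh 0 A) by (apply ex_RInt_cont_R; apply Kh_cont).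
assert (E : FF A - FF 0 = RInt f 0 A).
{ apply (PFTC A p n FF f Hpart).
  - intros y. unfold FF. apply cp_mult. apply cp_id. apply Kh_cont.
  - unfold f. apply ex_RInt_minus_R; auto. apply akh_int.
  - intros i Hi y Hy.
    assert (Hy' : 0 < y < A).
    { pose proof (part_range A p n Hpart i ltac:(lia)). pose proof (part_range A p n Hpart (S i) ltac:(lia)). lra. }
    destruct (Hp i Hi) as [Hkc _]. specialize (Hkc y Hy).
    assert (Hkc' : continuity_pt k y) by (apply continuity_pt_filterlim; auto).
    split.
    + apply is_derive_Reals.
      assert (DK : derivable_pt_lim Kh y (- kh y)).
      { apply is_derive_Reals.
        apply is_derive_ext_loc with (fun z => RInt kh z A).
        { exists (mkposreal (Rmin y (A - y)) ltac:(apply Rmin_glb_lt; lra)).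
          intros z Hzz. change (Rabs (z - y) < Rmin y (A - y)) in Hzz.
          assert (Rabs (z - y) < y) by (eapply Rlt_le_trans; [exact Hzz|apply Rmin_l]).
          assert (Rabs (z - y) < A - y) by (eapply Rlt_le_trans; [exact Hzz|apply Rmin_r]).
          unfold Kh. rewrite cl_id. reflexivity. unfold Rabs in *; destruct Rcase_abs; lra. }
        apply (is_derive_RInt' kh (fun z => RInt kh z A) y A).
        { exists (mkposreal (Rmin y (A - y)) ltac:(apply Rmin_glb_lt; lra)).
          intros z Hzz. change (Rabs (z - y) < Rmin y (A - y)) in Hzz.
          assert (Rabs (z - y) < y) by (eapply Rlt_le_trans; [exact Hzz|apply Rmin_l]).
          assert (Rabs (z - y) < A - y) by (eapply Rlt_le_trans; [exact Hzz|apply Rmin_r]).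
          refine (RInt_correct (V:=R_CompleteNormedModule) kh z A _).
          apply kh_sub; unfold Rabs in *; destruct Rcase_abs; lra. }
        apply continuity_pt_filterlim. apply kh_cont_at; auto. }
      pose proof (derivable_pt_lim_mult (fun a => a) Kh y _ _ (derivable_pt_lim_id y) DK) as DM.
      unfold f. replace (Kh y - y * kh y) with (1 * Kh y + y * - kh y) by ring. exact DM.
    + apply continuity_pt_filterlim. unfold f. apply cp_minus. apply Kh_cont.
      apply cp_mult. apply cp_id. apply kh_cont_at; auto. }
unfold FF in E. rewrite Kh_A, Kh_0 in E.
unfold f in E. rewrite RInt_minus_R in E; auto. 2: apply akh_int. lra.
Qed.

Lemma den_pos : 0 < RInt (fun a => a * kh a) 0 A.
Proof.
rewrite akh_eq. apply pos_cont0; auto. apply Kh_cont. intros; apply Kh_nonneg.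
rewrite Kh_0; lra.
Qed.

Lemma species_main : exists psi Lam, 0 < Lam /\
  (forall s, -1 < psi s) /\
  (forall t, 0 <= t -> Pi A mu k zeta c (fun a => x a t) = Lam * exp (zeta * t - RInt Gh 0 t)) /\
  (forall t a, 0 <= t -> 0 <= a <= A ->
     x a t = xstar mu zeta c a * Pi A mu k zeta c (fun a => x a t) * (1 + psi (t - a))) /\
  (forall t, 0 <= t -> psi t = RInt (fun a => ktilde mu k zeta a * psi (t - a)) 0 A).
Proof.
pose proof den_pos as Hd. pose proof L0_pos as HL.
set (Lam := L 0 / RInt (fun a => a * kh a) 0 A).
assert (HLam : 0 < Lam) by (apply Rdiv_lt_0_compat; auto).
exists (fun s => phi s / Lam - 1), Lam. split; auto.
assert (HPi : forall t, 0 <= t -> Pi A mu k zeta c (fun a => x a t) = Lam * exp (zeta * t - RInt Gh 0 t)).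
{ intros t Ht. unfold Pi. rewrite num_eq by auto. rewrite den_eq. rewrite L_const by auto.
  unfold Lam. field. lra. }
split; [|split; [exact HPi|split]].
- intros s. pose proof (phi_pos s). assert (0 < phi s / Lam) by (apply Rdiv_lt_0_compat; auto). lra.
- intros t a Ht Ha. rewrite HPi by auto. rewrite x_W by auto. rewrite xs_eq. field. lra.
- intros t Ht. rewrite (RInt_ext_R _ (fun a => / Lam * (kh a * phi (t - a)) - kh a)).
  2:{ intros a Ha. rewrite Rmin_left, Rmax_right in Ha by lra. rewrite kh_eq by lra. field. lra. }
  rewrite RInt_minus_R. rewrite RInt_scal_R. rewrite kh_one. rewrite <- renewal by auto. field. lra.
  apply PCint. apply kh_PC. intros; apply shift_cont, phi_cont.
  apply ex_RInt_scal_R. apply PCint. apply kh_PC. intros; apply shift_cont, phi_cont.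
  apply kh_int.
Qed.

End Species.

Lemma deriv_from (eta G : R -> R) Lam zeta t : 0 < Lam -> (forall y, continuity_pt G y) ->
  (forall s, 0 <= s -> eta s = ln (Lam * exp (zeta * s - RInt G 0 s))) -> 0 <= t ->
  deriv_nonneg eta t (zeta - G t).
Proof.
intros HL HG He Ht.
set (f := fun s => ln Lam + (zeta * s - RInt G 0 s)).
assert (Ef : forall s, 0 <= s -> eta s = f s).
{ intros s Hs. rewrite He by auto. unfold f. rewrite ln_mult, ln_exp; auto. apply exp_pos. }
assert (Df : derivable_pt_lim f t (zeta - G t)).
{ unfold f. replace (zeta - G t) with (0 + (zeta * 1 - G t)) by ring.
  apply (derivable_pt_lim_plus (fun _ => ln Lam) (fun s => zeta * s - RInt G 0 s)).
  apply derivable_pt_lim_const.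
  apply (derivable_pt_lim_minus (fun s => zeta * s) (fun s => RInt G 0 s)).
  apply (derivable_pt_lim_scal (fun s => s)). apply derivable_pt_lim_id.
  apply is_derive_Reals. apply Psi_deriv; auto. }
unfold deriv_nonneg. apply filterlim_locally. intros eps.
destruct (Df eps (cond_pos eps)) as [d Hd].
exists d. intros s Hs [Hs0 Hst].
change (Rabs ((eta s - eta t) / (s - t) - (zeta - G t)) < eps).
rewrite !Ef by auto.
assert (Hh : s - t <> 0) by lra.
specialize (Hd (s - t) Hh Hs). assert (Ets : forall a b : R, a + (b - a) = b) by (intros; ring).
rewrite Ets in Hd. exact Hd.
Qed.

Lemma Pi_ext A mu k zeta c (f g : R -> R) : (forall a, 0 <= a <= A -> f a = g a) -> 0 <= A ->
  Pi A mu k zeta c f = Pi A mu k zeta c g.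
Proof.
intros H HA. unfold Pi. f_equal. apply RInt_ext_R. intros y Hy.
rewrite Rmin_left, Rmax_right in Hy by lra. rewrite H by lra. reflexivity.
Qed.

Lemma xstar_pos mu zeta c a : 0 < c -> 0 < xstar mu zeta c a.
Proof. intros. unfold xstar. apply Rmult_lt_0_compat; auto. apply exp_pos. Qed.

Lemma int_factor A g (x xs : R -> R) e psi : 0 <= A -> PC A g -> cont_on_cc A x ->
  (forall a, 0 <= a <= A -> x a = xs a * exp e * (1 + psi a)) ->
  RInt (fun a => g a * x a) 0 A = exp e * RInt (fun a => g a * xs a * (1 + psi a)) 0 A.
Proof.
intros HA Hg Hx He.
assert (I1 : ex_RInt (fun a => g a * x a) 0 A) by (apply PC_cc_int; auto).
assert (I2 : ex_RInt (fun a => g a * xs a * (1 + psi a)) 0 A).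
{ apply ex_RInt_ext_R with (fun a => / exp e * (g a * x a)).
  intros y Hy. rewrite Rmin_left, Rmax_right in Hy by lra. rewrite He by lra.
  field. apply Rgt_not_eq, exp_pos. apply ex_RInt_scal_R; auto. }
rewrite <- RInt_scal_R by auto. apply RInt_ext_R. intros y Hy.
rewrite Rmin_left, Rmax_right in Hy by lra. rewrite He by lra. ring.
Qed.

Theorem proposition2
  (A : R) (mu1 mu2 k1 k2 g1 g2 : R -> R) (zeta1 zeta2 c1 c2 : R)
  (u : R -> R) (x10 x20 : R -> R) (x1 x2 : R -> R -> R) :
  0 < A ->
  admissible A mu1 -> admissible A mu2 ->
  admissible A k1 -> admissible A k2 ->
  admissible A g1 -> admissible A g2 ->
  is_zeta A mu1 k1 zeta1 -> is_zeta A mu2 k2 zeta2 ->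
  0 < c1 -> 0 < c2 ->
  (forall t, 0 <= t ->
     filterlim u (within (fun s => 0 <= s) (locally t)) (locally (u t))) ->
  in_F A k1 x10 -> in_F A k2 x20 ->
  is_solution A mu1 mu2 k1 k2 g1 g2 u x10 x20 x1 x2 ->
  let Pi1 := Pi A mu1 k1 zeta1 c1 in
  let Pi2 := Pi A mu2 k2 zeta2 c2 in
  let xs1 := xstar mu1 zeta1 c1 in
  let xs2 := xstar mu2 zeta2 c2 in
  let eta1 := fun t => ln (Pi1 (fun a => x1 a t)) in
  let eta2 := fun t => ln (Pi2 (fun a => x2 a t)) in
  exists psi1 psi2 : R -> R,
    (forall s, - A <= s -> -1 < psi1 s /\ -1 < psi2 s) /\
    (forall t a, 0 <= t -> 0 <= a <= A ->
       psi1 (t - a) = x1 a t / (xs1 a * Pi1 (fun b => x1 b t)) - 1 /\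
       psi2 (t - a) = x2 a t / (xs2 a * Pi2 (fun b => x2 b t)) - 1) /\
    (forall t a, 0 <= t -> 0 <= a <= A ->
       x1 a t = xs1 a * exp (eta1 t) * (1 + psi1 (t - a)) /\
       x2 a t = xs2 a * exp (eta2 t) * (1 + psi2 (t - a))) /\
    (forall t, 0 <= t ->
       deriv_nonneg eta1 t
         (zeta1 - u t - exp (eta2 t) *
            RInt (fun a => g1 a * xs2 a * (1 + psi2 (t - a))) 0 A) /\
       deriv_nonneg eta2 t
         (zeta2 - u t - exp (- eta1 t) /
            RInt (fun a => g2 a * xs1 a * (1 + psi1 (t - a))) 0 A)) /\
    (forall t, 0 <= t ->
       psi1 t = RInt (fun a => ktilde mu1 k1 zeta1 a * psi1 (t - a)) 0 A /\
       psi2 t = RInt (fun a => ktilde mu2 k2 zeta2 a * psi2 (t - a)) 0 A) /\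
    eta1 0 = ln (Pi1 x10) /\ eta2 0 = ln (Pi2 x20) /\
    (forall a, 0 <= a <= A ->
       psi1 (- a) = x10 a / (xs1 a * Pi1 x10) - 1 /\
       psi2 (- a) = x20 a / (xs2 a * Pi2 x20) - 1).
Proof.
intros HA Hmu1 Hmu2 Hk1 Hk2 Hg1 Hg2 Hz1 Hz2 Hc1 Hc2 Hu Hx10 Hx20 Hsol.
destruct Hsol as [Hx1 [Hx2 [HF [Hb [Hinit [Hch1 Hch2]]]]]].
intros Pi1 Pi2 xs1 xs2 eta1 eta2.
set (F1 := fun t => RInt (fun al => g1 al * x2 al t) 0 A).
set (F2 := fun t => / RInt (fun al => g2 al * x1 al t) 0 A).
assert (HA0 : 0 <= A) by lra.
assert (Hcc1 : forall t, 0 <= t -> cont_on_cc A (fun a => x1 a t)).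
{ intros t Ht. destruct (HF t Ht) as [[[H _] _] _]. exact H. }
assert (Hcc2 : forall t, 0 <= t -> cont_on_cc A (fun a => x2 a t)).
{ intros t Ht. destruct (HF t Ht) as [_ [[H _] _]]. exact H. }
assert (Hpos1 : forall t a, 0 <= t -> 0 <= a <= A -> 0 < x1 a t).
{ intros t a Ht Ha. destruct (HF t Ht) as [[_ [H _]] _]. auto. }
assert (Hpos2 : forall t a, 0 <= t -> 0 <= a <= A -> 0 < x2 a t).
{ intros t a Ht Ha. destruct (HF t Ht) as [_ [_ [H _]]]. auto. }
assert (Hg1' : PC A g1 /\ (forall a, 0 <= a <= A -> 0 <= g1 a)) by (split; apply Hg1).
assert (Hg2' : PC A g2 /\ (forall a, 0 <= a <= A -> 0 <= g2 a)) by (split; apply Hg2).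
assert (Hucont : forall y, continuity_pt (fun z => u (Rmax 0 z)) y) by (apply hl_clamp; auto).
assert (HI2 : forall t, 0 <= t -> 0 < RInt (fun al => g2 al * x1 al t) 0 A).
{ intros t Ht. apply pos_min; auto; try apply Hg2; try (apply Hcc1; auto); intros; apply Hpos1; auto. }
assert (HG1 : forall y, continuity_pt (fun s => u (Rmax 0 s) + F1 (Rmax 0 s)) y).
{ intros y. apply cp_plus. apply Hucont. apply hl_eps.
  intros t Ht eps Heps. destruct (F_cont A g1 x2 HA0 (proj1 Hg1') (proj2 Hg1') Hx2 Hcc2 t Ht eps Heps) as [d [Hd H]].
  exists d; split; auto. }
assert (HG2 : forall y, continuity_pt (fun s => u (Rmax 0 s) + F2 (Rmax 0 s)) y).
{ intros y. apply cp_plus. apply Hucont. unfold F2.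
  apply (cp_inv (fun s => RInt (fun al => g2 al * x1 al (Rmax 0 s)) 0 A)).
  apply Rgt_not_eq. apply HI2. apply Rmax_l.
  apply (hl_eps (fun t => RInt (fun al => g2 al * x1 al t) 0 A)).
  intros t Ht eps Heps. destruct (F_cont A g2 x1 HA0 (proj1 Hg2') (proj2 Hg2') Hx1 Hcc1 t Ht eps Heps) as [d [Hd H]].
  exists d; split; auto. }
assert (HxF1 : forall t, 0 <= t -> in_F A k1 (fun a => x1 a t)) by (intros; apply HF; auto).
assert (HxF2 : forall t, 0 <= t -> in_F A k2 (fun a => x2 a t)) by (intros; apply HF; auto).
destruct (species_main A mu1 k1 u F1 zeta1 c1 x1 HA Hmu1 Hk1 Hz1 Hc1 Hx1 HxF1 Hch1 HG1)
  as [psi1 [L1 [HL1 [Hp1 [HPi1 [Hxf1 Hr1]]]]]].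
destruct (species_main A mu2 k2 u F2 zeta2 c2 x2 HA Hmu2 Hk2 Hz2 Hc2 Hx2 HxF2 Hch2 HG2)
  as [psi2 [L2 [HL2 [Hp2 [HPi2 [Hxf2 Hr2]]]]]].
assert (HP1 : forall t, 0 <= t -> 0 < Pi1 (fun a => x1 a t)).
{ intros t Ht. unfold Pi1. rewrite HPi1 by auto. apply Rmult_lt_0_compat; auto. apply exp_pos. }
assert (HP2 : forall t, 0 <= t -> 0 < Pi2 (fun a => x2 a t)).
{ intros t Ht. unfold Pi2. rewrite HPi2 by auto. apply Rmult_lt_0_compat; auto. apply exp_pos. }
assert (Hxe1 : forall t a, 0 <= t -> 0 <= a <= A -> x1 a t = xs1 a * exp (eta1 t) * (1 + psi1 (t - a))).
{ intros t a Ht Ha. unfold eta1. rewrite exp_ln by (apply HP1; auto). apply Hxf1; auto. }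
assert (Hxe2 : forall t a, 0 <= t -> 0 <= a <= A -> x2 a t = xs2 a * exp (eta2 t) * (1 + psi2 (t - a))).
{ intros t a Ht Ha. unfold eta2. rewrite exp_ln by (apply HP2; auto). apply Hxf2; auto. }
assert (Hpsi1 : forall t a, 0 <= t -> 0 <= a <= A -> psi1 (t - a) = x1 a t / (xs1 a * Pi1 (fun b => x1 b t)) - 1).
{ intros t a Ht Ha. rewrite (Hxf1 t a Ht Ha). unfold xs1, Pi1. pose proof (xstar_pos mu1 zeta1 c1 a Hc1).
  pose proof (HP1 t Ht). unfold Pi1 in H0. field. split; lra. }
assert (Hpsi2 : forall t a, 0 <= t -> 0 <= a <= A -> psi2 (t - a) = x2 a t / (xs2 a * Pi2 (fun b => x2 b t)) - 1).
{ intros t a Ht Ha. rewrite (Hxf2 t a Ht Ha). unfold xs2, Pi2. pose proof (xstar_pos mu2 zeta2 c2 a Hc2).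
  pose proof (HP2 t Ht). unfold Pi2 in H0. field. split; lra. }
assert (EP1 : Pi1 (fun a => x1 a 0) = Pi1 x10).
{ apply Pi_ext; auto. intros a Ha. apply Hinit; auto. }
assert (EP2 : Pi2 (fun a => x2 a 0) = Pi2 x20).
{ apply Pi_ext; auto. intros a Ha. apply Hinit; auto. }
exists psi1, psi2.
split; [|split; [|split; [|split; [|split; [|split; [|split]]]]]].
- intros s _. split; auto.
- intros t a Ht Ha. split; auto.
- intros t a Ht Ha. split; auto.
- intros t Ht. split.
  + replace (zeta1 - u t - exp (eta2 t) * RInt (fun a => g1 a * xs2 a * (1 + psi2 (t - a))) 0 A)
      with (zeta1 - (fun s => u (Rmax 0 s) + F1 (Rmax 0 s)) t).
    2:{ rewrite Rmax_right by auto. unfold F1.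
        rewrite (int_factor A g1 (fun a => x2 a t) xs2 (eta2 t) (fun a => psi2 (t - a)));
        try ring; try apply Hg1; try (apply Hcc2; auto); try (intros a Ha; apply Hxe2; auto); lra. }
    apply (deriv_from eta1 (fun s => u (Rmax 0 s) + F1 (Rmax 0 s)) L1 zeta1 t); auto. intros s Hs. unfold eta1. f_equal. apply HPi1; auto.
  + replace (zeta2 - u t - exp (- eta1 t) / RInt (fun a => g2 a * xs1 a * (1 + psi1 (t - a))) 0 A)
      with (zeta2 - (fun s => u (Rmax 0 s) + F2 (Rmax 0 s)) t).
    2:{ rewrite Rmax_right by auto. unfold F2.
        rewrite (int_factor A g2 (fun a => x1 a t) xs1 (eta1 t) (fun a => psi1 (t - a)));
        try apply Hg2; try (apply Hcc1; auto); try (intros a Ha; apply Hxe1; auto); try lra.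
        assert (HJ : 0 < exp (eta1 t) * RInt (fun a => g2 a * xs1 a * (1 + psi1 (t - a))) 0 A).
        { rewrite <- (int_factor A g2 (fun a => x1 a t) xs1 (eta1 t) (fun a => psi1 (t - a)));
          try apply Hg2; try (apply Hcc1; auto); try (intros a Ha; apply Hxe1; auto); try lra.
          apply HI2; auto. }
        assert (HJ' : RInt (fun a => g2 a * xs1 a * (1 + psi1 (t - a))) 0 A <> 0).
        { intros E. rewrite E in HJ. lra. }
        rewrite exp_Ropp. field. split; auto. apply Rgt_not_eq, exp_pos. }
    apply (deriv_from eta2 (fun s => u (Rmax 0 s) + F2 (Rmax 0 s)) L2 zeta2 t); auto. intros s Hs. unfold eta2. f_equal. apply HPi2; auto.
- intros t Ht. split; auto.
- unfold eta1. rewrite EP1. reflexivity.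
- unfold eta2. rewrite EP2. reflexivity.
- intros a Ha. split.
  + replace (- a) with (0 - a) by ring. rewrite Hpsi1 by (auto; lra). rewrite EP1.
    destruct (Hinit a Ha) as [E _]. rewrite E. reflexivity.
  + replace (- a) with (0 - a) by ring. rewrite Hpsi2 by (auto; lra). rewrite EP2.
    destruct (Hinit a Ha) as [_ E]. rewrite E. reflexivity.
Qed.
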